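(* Let $\theta>0$. Let $X_1,\ldots,X_n$ be independent random variables with $P(X_i>x)=(1+x/\theta)^{-\alpha_i}$, $x>0$, $\alpha_i>0$, and $Y_1,\ldots,Y_n$ independent random variables with $P(Y_i>x)=(1+x/\theta)^{-\alpha_i^*}$, $x>0$, $\alpha_i^*>0$. Let $\underline{\alpha}=(\alpha_1,\ldots,\alpha_n)$ and $\underline{\alpha}^*=(\alpha_1^*,\ldots,\alpha_n^* )$. If $\underline{\alpha}\prec^{w}\underline{\alpha}^*$, then $X_{n:n}\leq_{rh}Y_{n:n}$.
   Context: $X_{n:n}=\max(X_1,\ldots,X_n)$. Weak supermajorization: $\underline{a}\prec^{w}\underline{b}$ means $\sum_{i=1}^k a_{i:n}\geq\sum_{i=1}^k b_{i:n}$ for all $k=1,\ldots,n$, where $a_{1:n}\leq\cdots\leq a_{n:n}$ is the increasing rearrangement of $\underline a$ (similarly for $\underline b$). $X\leq_{rh}Y$ (reversed hazard rate order) for $X\sim F$, $Y\sim G$ means $G(x)/F(x)$ is increasing in $x$ (equivalently $f/F\leq g/G$). *)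

(* Defs.v *)
From HB Require Import structures.
From mathcomp Require Import all_boot all_order all_algebra.
From mathcomp Require Import all_classical all_reals all_analysis.
Set Implicit Arguments. Unset Strict Implicit. Unset Printing Implicit Defensive.
Import Order.TTheory GRing.Theory Num.Theory.
Local Open Scope classical_set_scope.
Local Open Scope ring_scope.

Section Defs.
Context {d : measure_display} {T : measurableType d} {R : realType}.
Implicit Types (P : probability T R).

Definition mutually_independent (P : probability T R) (n : nat)
  (X : 'I_n -> {RV P >-> R}) : Prop :=
  forall B : 'I_n -> set R, (forall i, measurable (B i)) ->
    P [set t | forall i, B i (X i t)] = (\prod_(i < n) P (X i @^-1` B i))%E.

(* X_{n:n} = max(X_1,...,X_n), as an extended real (= -oo only if n = 0) *)
Definition maxrv (P : probability T R) (n : nat) (X : 'I_n -> {RV P >-> R})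
  (t : T) : \bar R := \big[Order.max/-oo%E]_(i < n) (X i t)%:E.

Definition dfun (P : probability T R) (Z : T -> \bar R) (x : R) : R :=
  fine (P [set t | (Z t <= x%:E)%E]).
End Defs.

(* reversed hazard rate order for distribution functions F (of X), G (of Y):
   G/F increasing, in the standard cross-multiplied form
   F(x) G(y) >= F(y) G(x) for all x <= y. *)
Definition rh_le {R : realType} (F G : R -> R) : Prop :=
  forall x y : R, x <= y -> F y * G x <= F x * G y.

(* weak supermajorization a ≺^w b : for every k = 1..n, the sum of the k
   smallest entries of a is >= the sum of the k smallest entries of b. *)
Definition weak_supmaj {R : realType} (n : nat) (a b : 'I_n -> R) : Prop :=
  forall k : nat, (1 <= k <= n)%N ->
    \sum_(x <- take k (sort <=%R (codom a))) x >=
    \sum_(x <- take k (sort <=%R (codom b))) x.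
Arguments dfun {d T R} P Z x.

(* Main.v *)
Require Import Defs.
From HB Require Import structures.
From mathcomp Require Import all_boot all_order all_algebra.
From mathcomp Require Import all_classical all_reals all_analysis.
From mathcomp Require Import ring lra.
Import Order.TTheory GRing.Theory Num.Theory.
Local Open Scope classical_set_scope.
Local Open Scope ring_scope.

Section Maj.
Variable R : realType.
Variable g : R -> R.
Definition sl x y := (g x - g y) / (x - y).
Hypothesis gdec : forall {x y}, 0 < x -> x <= y -> g y <= g x.
Hypothesis gconv : forall {x y z}, 0 < x -> x < y -> y < z ->
  sl x y <= sl x z /\ sl x z <= sl y z.

Lemma sl_sym x y : sl x y = sl y x.
Proof. by rewrite /sl -(opprB (g x)) -(opprB x) invrN mulrNN. Qed.

Lemma sl_le0 x y : 0 < x -> 0 < y -> sl x y <= 0.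
Proof.
wlog xy : x y / x <= y.
  move=> H x0 y0; case: (leP x y) => [/H|/ltW /H]; first by apply.
  by rewrite sl_sym; apply.
move=> x0 y0; rewrite /sl; case: (eqVneq x y) => [->|nxy]; first by rewrite !subrr mul0r.
have xy' : x < y by rewrite lt_def eq_sym nxy xy.
apply: mulr_ge0_le0; first by rewrite subr_ge0; apply: gdec.
by rewrite invr_le0 subr_le0.
Qed.

Lemma sl_mono1 x y1 y2 : 0 < x -> 0 < y1 -> y1 <= y2 -> y1 != x -> y2 != x ->
  sl x y1 <= sl x y2.
Proof.
move=> x0 y10 y12 n1 n2.
case: (eqVneq y1 y2) => [->//|n12].
have l12 : y1 < y2 by rewrite lt_def eq_sym n12.
case: (ltgtP y2 x) => [h2||]; last by move=> e; rewrite e eqxx in n2.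
-
  have := gconv y10 l12 h2; rewrite !(sl_sym x); by case.
- move=> h2; case: (ltgtP y1 x) => [h1|h1|e]; last by rewrite e eqxx in n1.
  + by rewrite (sl_sym x y1); have [] := gconv y10 h1 h2; apply: le_trans.
  + by have [] := gconv x0 h1 l12.
Qed.

Lemma sl_mono x y x' y' : 0 < x -> 0 < y -> x <= x' -> y <= y' -> x != y -> x' != y' ->
  sl x y <= sl x' y'.
Proof.
move=> x0 y0 xx yy nxy nxy'.
have x'0 : 0 < x' by apply: lt_le_trans xx.
have y'0 : 0 < y' by apply: lt_le_trans yy.
case: (eqVneq x' y) => [e|ne].
  case: (eqVneq x y') => [e'|ne'].
    have h1 : x <= y by rewrite -e.
    have h2 : y <= x by rewrite e'.
    by move: nxy; rewrite eq_le h1 h2.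
  have nyx : y != x by rewrite eq_sym.
  have ny'x : y' != x by rewrite eq_sym.
  apply: (@le_trans _ _ (sl x y')); first by apply: sl_mono1.
  by rewrite (sl_sym x) (sl_sym x'); apply: sl_mono1.
have nyx' : y != x' by rewrite eq_sym.
have ny'x' : y' != x' by rewrite eq_sym.
apply: (@le_trans _ _ (sl x' y)).
  by rewrite (sl_sym x) (sl_sym x'); apply: sl_mono1.
by apply: sl_mono1.
Qed.

Lemma tw (s t : seq R) : size s = size t -> sorted <=%R s -> sorted <=%R t ->
  {in s, forall x, 0 < x} -> {in t, forall x, 0 < x} ->
  forall D0 c, c <= 0 ->
  (D0 = 0 \/ (forall x y, x \in s -> y \in t -> x != y -> c <= sl x y)) ->
  (forall k, D0 + \sum_(x <- take k t) x - \sum_(x <- take k s) x <= 0) ->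
  - c * D0 <= \sum_(x <- t) g x - \sum_(x <- s) g x.
Proof.
elim: s t => [|u s IH] [|v t] //=.
  move=> _ _ _ _ _ D0 c c0 _ /(_ 0%N); rewrite /= !big_nil subr0 addr0 => D00.
  by rewrite subr0; nra.
move=> [sz] ps pt ps0 pt0 D0 c c0 Hc Hk.
have ss := path_sorted ps; have st := path_sorted pt.
have ms := order_path_min (@le_trans _ R) ps.
have mt := order_path_min (@le_trans _ R) pt.
have u0 : 0 < u by apply: ps0; rewrite inE eqxx.
have v0 : 0 < v by apply: pt0; rewrite inE eqxx.
have s0 : {in s, forall x, 0 < x} by move=> x xs; apply: ps0; rewrite inE xs orbT.
have t0 : {in t, forall x, 0 < x} by move=> x xs; apply: pt0; rewrite inE xs orbT.
have D00 : D0 <= 0 by have := Hk 0%N; rewrite /= !big_nil addr0 subr0.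
have Hk' : forall k, (D0 + (v - u)) + \sum_(x <- take k t) x - \sum_(x <- take k s) x <= 0.
  move=> k; have := Hk k.+1; rewrite /= !big_cons.
  by apply: le_trans; rewrite le_eqVlt; apply/orP; left; apply/eqP; ring.
rewrite !big_cons.
case: (eqVneq u v) => [e|nuv].
  subst v.
  have Hk0 : forall k, D0 + \sum_(x <- take k t) x - \sum_(x <- take k s) x <= 0.
    by move=> k; have := Hk' k; rewrite subrr addr0.
  have : - c * D0 <= \sum_(j <- t) g j - \sum_(j <- s) g j.
    apply: (IH t sz ss st s0 t0 D0 c c0) => //; case: Hc => [->|Hc]; [by left|right].
    by move=> x y xs yt; apply: Hc; rewrite inE ?xs ?yt orbT.
  by move=> HH; apply: (le_trans HH); rewrite le_eqVlt; apply/orP; left; apply/eqP; ring.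
set S := sl u v.
have S0 : S <= 0 by apply: sl_le0.
have H := IH t sz ss st s0 t0 (D0 + (v - u)) S S0 _ Hk'.
have {H} H : - S * (D0 + (v - u)) <= \sum_(j <- t) g j - \sum_(j <- s) g j.
  apply: H; right => x y xs yt nxy; apply: sl_mono => //.
  - by move/allP: ms; apply.
  - by move/allP: mt; apply.
have gvu : g v - g u = S * (v - u).
  rewrite /S sl_sym /sl mulrAC -mulrA mulfV ?mulr1 //.
  by rewrite subr_eq0 eq_sym.
have cS : - c * D0 <= - S * D0.
  case: Hc => [->|Hc]; first by rewrite !mulr0.
  have : c <= S by apply: Hc; rewrite ?inE ?eqxx.
  by move=> cs; nra.
nra.
Qed.
End Maj.
Section Calc.
Variable R : realType.

Lemma der_L (k c : R) : 0 < k -> 0 < c ->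
  is_derive c 1 (fun c => ln (1 - expR (- (k * c)))) (k / (expR (k * c) - 1)).
Proof.
move=> k0 c0.
have pos : 0 < 1 - expR (- (k * c)) by rewrite subr_gt0 expR_lt1 oppr_lt0 mulr_gt0.
have H1 : is_derive c 1 (fun c => 1 - expR (- (k * c))) (k * expR (- (k * c))).
  apply: is_derive_eq. 
  rewrite add0r mul1r mulrN opprK mulrC; congr (_ * _); exact: mulr1.
have H := @is_derive1_comp _ (@ln R) (fun c => 1 - expR (- (k * c))) c _ _ (is_derive1_ln pos) H1.
apply: is_derive_eq H _.
have e1 : 0 < expR (k * c) - 1 by rewrite subr_gt0 expR_gt1 mulr_gt0.
rewrite expRN. 
have e0 : 0 < expR (k * c) by apply: expR_gt0.
by field; rewrite !gt_eqF.
Qed.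

Lemma der_D (k c : R) : 0 < k -> 0 < c ->
  is_derive c 1 (fun c => k / (expR (k * c) - 1))
    (- (k ^+ 2 * expR (k * c)) / (expR (k * c) - 1) ^+ 2).
Proof.
move=> k0 c0.
have e1 : 0 < expR (k * c) - 1 by rewrite subr_gt0 expR_gt1 mulr_gt0.
have Hf : is_derive c 1 (fun c => expR (k * c) - 1) (k * expR (k * c)).
  apply: is_derive_eq.
  rewrite subr0 mulrC; congr (_ * _); exact: mulr1.
have HV := @is_deriveV R (fun c => expR (k * c) - 1) c _ 1 (lt0r_neq0 e1) Hf.
have HZ := is_deriveZ k HV.
apply: is_derive_eq HZ _.
rewrite /GRing.scale /=.
by field; apply: lt0r_neq0.
Qed.

Lemma mvt2 (f df : R -> R) (a b : R) : a < b ->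
  (forall t : R, a <= t <= b -> is_derive t 1 f (df t)) ->
  exists2 c, a < c < b & f b - f a = df c * (b - a).
Proof.
move=> ab H.
have [||c] := @MVT R f df a b ab.
- by move=> t; rewrite in_itv /= => /andP[h1 h2]; apply: H; rewrite !ltW.
- apply: derivable_within_continuous => t; rewrite in_itv /= => ht.
  by case: (H t ht).
- by rewrite in_itv /= => hc e; exists c.
Qed.

Lemma mono_deriv (f df : R -> R) (a b : R) : a <= b ->
  (forall t : R, a <= t <= b -> is_derive t 1 f (df t)) ->
  (forall t : R, a <= t <= b -> 0 <= df t) -> f a <= f b.
Proof.
rewrite le_eqVlt => /orP[/eqP -> //|ab] H H0.
have [c /andP[c1 c2] e] := @mvt2 f df a b ab H.
rewrite -subr_ge0 e; apply: mulr_ge0; last by rewrite subr_ge0 ltW.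
by apply: H0; rewrite !ltW.
Qed.

Lemma med {A B p q : R} : 0 < p -> 0 < q -> A / p <= B / q ->
  A / p <= (A + B) / (p + q) /\ (A + B) / (p + q) <= B / q.
Proof.
move=> p0 q0 h.
set a := A / p in h *; set b := B / q in h *.
have -> : A = a * p by rewrite /a divfK // lt0r_neq0.
have -> : B = b * q by rewrite /b divfK // lt0r_neq0.
have pq0 : 0 < p + q by apply: addr_gt0.
split.
  rewrite ler_pdivlMr //; nra.
rewrite ler_pdivrMr //; nra.
Qed.

Lemma chord3 (f df : R -> R) (x y z : R) : x < y -> y < z ->
  (forall t : R, x <= t <= z -> is_derive t 1 f (df t)) ->
  (forall s t : R, x <= s -> s <= t -> t <= z -> df s <= df t) ->
  (f y - f x) / (y - x) <= (f z - f y) / (z - y).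
Proof.
move=> xy yz H M.
have [c1 /andP[c11 c12] e1] : exists2 c, x < c < y & f y - f x = df c * (y - x).
  apply: mvt2 => // t /andP[h1 h2]; apply: H; rewrite h1 /=.
  by apply: (le_trans h2); rewrite ltW.
have [c2 /andP[c21 c22] e2] : exists2 c, y < c < z & f z - f y = df c * (z - y).
  apply: mvt2 => // t /andP[h1 h2]; apply: H; rewrite h2 andbT.
  by apply: le_trans h1; rewrite ltW.
rewrite e1 e2 !mulfK ?lt0r_neq0 ?subr_gt0 //.
by apply: M; [exact: ltW | exact: ltW (lt_trans c12 c21) | exact: ltW].
Qed.


Lemma expchord (w1 w2 : R) : 0 < w1 -> w1 <= w2 ->
  (expR w1 - 1) / w1 <= (expR w2 - 1) / w2.
Proof.
move=> w10; rewrite le_eqVlt => /orP[/eqP -> //|w12].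
have M : forall s t : R, 0 <= s -> s <= t -> t <= w2 -> expR s <= expR t.
  by move=> s t _ st _; rewrite ler_expR.
have := @chord3 expR expR 0 w1 w2 w10 w12 (fun t _ => is_derive_expR t) M.
rewrite expR0 subr0 => h.
have w20 : 0 < w2 - w1 by rewrite subr_gt0.
have [h1 _] := med w10 w20 h.
move: h1.
have -> : expR w1 - 1 + (expR w2 - expR w1) = expR w2 - 1 by ring.
have -> : w1 + (w2 - w1) = w2 by ring.
by [].
Qed.

Lemma cosh_mono (s t : R) : 0 <= s -> s <= t ->
  expR s + expR (- s) <= expR t + expR (- t).
Proof.
move=> s0 st.
rewrite !expRN.
have a1 : 1 <= expR s by rewrite -expR0 ler_expR.
have ab : expR s <= expR t by rewrite ler_expR.
set a := expR s in a1 ab *; set b := expR t in ab *.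
have a0 : 0 < a by apply: lt_le_trans a1.
have b0 : 0 < b by apply: lt_le_trans ab.
have ia1 : a^-1 <= 1 by rewrite invf_le1.
have ib1 : b^-1 <= 1 by rewrite invf_le1 // (le_trans a1).
have ia0 : 0 < a^-1 by rewrite invr_gt0.
have ib0 : 0 < b^-1 by rewrite invr_gt0.
have e : a^-1 - b^-1 = a^-1 * b^-1 * (b - a) by field; rewrite !lt0r_neq0.
have : a^-1 - b^-1 <= b - a.
  rewrite e; rewrite -[X in _ <= X]mul1r; apply: ler_wpM2r; first by rewrite subr_ge0.
  by nra.
lra.
Qed.

Definition sig (h : R) := expR h - expR (- h).

Lemma sigchord (h1 h2 : R) : 0 < h1 -> h1 <= h2 ->
  sig h1 / h1 <= sig h2 / h2.
Proof.
move=> h10; rewrite le_eqVlt => /orP[/eqP -> //|h12].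
have D : forall t : R, 0 <= t <= h2 -> is_derive t 1 sig (expR t + expR (- t)).
  move=> t _; rewrite /sig; apply: is_derive_eq.
  by rewrite mulrN1 opprK.
have M : forall s t : R, 0 <= s -> s <= t -> t <= h2 ->
    expR s + expR (- s) <= expR t + expR (- t).
  by move=> s t s0 st _; apply: cosh_mono.
have := @chord3 sig _ 0 h1 h2 h10 h12 D M.
rewrite /sig oppr0 subrr !subr0 addr0 => h.
have w20 : 0 < h2 - h1 by rewrite subr_gt0.
have [h1' _] := med h10 w20 h.
move: h1'.
have -> : expR h1 - expR (- h1) + (expR h2 - expR (- h2) - (expR h1 - expR (- h1))) = expR h2 - expR (- h2) by ring.
have -> : h1 + (h2 - h1) = h2 by ring.
by [].
Qed.


Definition chi (w : R) := w ^+ 2 * expR w / (expR w - 1) ^+ 2.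

Lemma chi_eq (w : R) : 0 < w -> chi w = (2 / (sig (w / 2) / (w / 2))) ^+ 2.
Proof.
move=> w0; rewrite /chi /sig expRN.
have -> : expR w = expR (w / 2) * expR (w / 2) by rewrite -expRD -splitr.
have E0 : 0 < expR (w / 2) by apply: expR_gt0.
have E1 : 1 < expR (w / 2) by rewrite expR_gt1 divr_gt0.
set E := expR (w / 2) in E0 E1 *.
have n1 : E * E - 1 != 0 by apply: lt0r_neq0; nra.
have n2 : E - E^-1 != 0.
  have -> : E - E^-1 = (E * E - 1) / E by field; apply: lt0r_neq0.
  by rewrite mulf_neq0 // invr_eq0 lt0r_neq0.
field.
by rewrite n1 !lt0r_neq0.
Qed.

Lemma sig_gt0 (h : R) : 0 < h -> 0 < sig h.
Proof. by move=> h0; rewrite /sig subr_gt0 ltr_expR gtrN. Qed.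

Lemma chi_mono (w1 w2 : R) : 0 < w1 -> w1 <= w2 -> chi w2 <= chi w1.
Proof.
move=> w10 w12.
have w20 : 0 < w2 by apply: lt_le_trans w12.
rewrite !chi_eq //.
have h10 : 0 < w1 / 2 by rewrite divr_gt0.
have h20 : 0 < w2 / 2 by rewrite divr_gt0.
have r1 : 0 < sig (w1 / 2) / (w1 / 2) by rewrite divr_gt0 // sig_gt0.
have r2 : 0 < sig (w2 / 2) / (w2 / 2) by rewrite divr_gt0 // sig_gt0.
have r12 : sig (w1 / 2) / (w1 / 2) <= sig (w2 / 2) / (w2 / 2).
  by apply: sigchord => //; rewrite ler_pM2r.
have i12 : (sig (w2 / 2) / (w2 / 2))^-1 <= (sig (w1 / 2) / (w1 / 2))^-1.
  by rewrite lef_pV2 ?posrE.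
have a0 : 0 <= 2 / (sig (w2 / 2) / (w2 / 2)) by rewrite ltW // divr_gt0.
have a1 : 2 / (sig (w2 / 2) / (w2 / 2)) <= 2 / (sig (w1 / 2) / (w1 / 2)).
  by rewrite ler_pM2l.
by rewrite !expr2; apply: ler_pM.
Qed.

Section Psi.
Variables u v : R.
Hypothesis u0 : 0 < u.
Hypothesis uv : u < v.

Definition psi (c : R) := ln (1 - expR (- (v * c))) - ln (1 - expR (- (u * c))).
Definition dpsi (c : R) := v / (expR (v * c) - 1) - u / (expR (u * c) - 1).
Definition ddpsi (c : R) := - (v ^+ 2 * expR (v * c)) / (expR (v * c) - 1) ^+ 2
  - (- (u ^+ 2 * expR (u * c)) / (expR (u * c) - 1) ^+ 2).

Let v0 : 0 < v. Proof. exact: lt_trans uv. Qed.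

Lemma der_psi (c : R) : 0 < c -> is_derive c 1 psi (dpsi c).
Proof.
move=> c0; have := is_deriveB (@der_L v c v0 c0) (@der_L u c u0 c0).
by move=> H; exact: H.
Qed.

Lemma der_dpsi (c : R) : 0 < c -> is_derive c 1 dpsi (ddpsi c).
Proof.
move=> c0; have := is_deriveB (@der_D v c v0 c0) (@der_D u c u0 c0).
by move=> H; exact: H.
Qed.

Lemma dpsi_le0 (c : R) : 0 < c -> dpsi c <= 0.
Proof.
move=> c0; rewrite /dpsi subr_le0.
have uc : 0 < u * c by rewrite mulr_gt0.
have uvc : u * c < v * c by rewrite ltr_pM2r.
have vc : 0 < v * c by rewrite mulr_gt0.
have h := @expchord (u * c) (v * c) uc (ltW uvc).
have e1 : 0 < expR (u * c) - 1 by rewrite subr_gt0 expR_gt1.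
have e2 : 0 < expR (v * c) - 1 by rewrite subr_gt0 expR_gt1.
have r1 : 0 < (expR (u * c) - 1) / (u * c) by rewrite divr_gt0.
have r2 : 0 < (expR (v * c) - 1) / (v * c) by rewrite divr_gt0.
have i12 : ((expR (v * c) - 1) / (v * c))^-1 <= ((expR (u * c) - 1) / (u * c))^-1.
  by rewrite lef_pV2 ?posrE.
have -> : v / (expR (v * c) - 1) = ((expR (v * c) - 1) / (v * c))^-1 / c.
  by field; rewrite !lt0r_neq0.
have -> : u / (expR (u * c) - 1) = ((expR (u * c) - 1) / (u * c))^-1 / c.
  by field; rewrite !lt0r_neq0.
by rewrite ler_pM2r // invr_gt0.
Qed.

Lemma ddpsi_ge0 (c : R) : 0 < c -> 0 <= ddpsi c.
Proof.
move=> c0; rewrite /ddpsi subr_ge0.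
have uc : 0 < u * c by rewrite mulr_gt0.
have uvc : u * c < v * c by rewrite ltr_pM2r.
have h := @chi_mono (u * c) (v * c) uc (ltW uvc).
have -> : - (v ^+ 2 * expR (v * c)) / (expR (v * c) - 1) ^+ 2 = - (chi (v * c) / c ^+ 2).
  by rewrite /chi; field; rewrite !lt0r_neq0 // subr_gt0 expR_gt1 mulr_gt0.
have -> : - (u ^+ 2 * expR (u * c)) / (expR (u * c) - 1) ^+ 2 = - (chi (u * c) / c ^+ 2).
  by rewrite /chi; field; rewrite !lt0r_neq0 // subr_gt0 expR_gt1 mulr_gt0.
by rewrite lerN2 ler_pM2r // invr_gt0 exprn_gt0.
Qed.

Lemma dpsi_mono (s t : R) : 0 < s -> s <= t -> dpsi s <= dpsi t.
Proof.
move=> s0 st; apply: (@mono_deriv dpsi ddpsi) => // x /andP[h1 _].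
  by apply: der_dpsi; apply: lt_le_trans h1.
by apply: ddpsi_ge0; apply: lt_le_trans h1.
Qed.

Lemma psi_dec (x y : R) : 0 < x -> x <= y -> psi y <= psi x.
Proof.
move=> x0 xy; rewrite -lerN2.
apply: (@mono_deriv (fun c => - psi c) (fun c => - dpsi c)) => // t /andP[h1 _].
  by apply: is_deriveN; apply: der_psi; apply: lt_le_trans h1.
by rewrite oppr_ge0; apply: dpsi_le0; apply: lt_le_trans h1.
Qed.

Lemma psi_chord (x y z : R) : 0 < x -> x < y -> y < z ->
  (psi y - psi x) / (y - x) <= (psi z - psi y) / (z - y).
Proof.
move=> x0 xy yz; apply: (@chord3 psi dpsi) => //.
  by move=> t /andP[h1 _]; apply: der_psi; apply: lt_le_trans h1.
by move=> s t h1 st _; apply: dpsi_mono => //; apply: lt_le_trans h1.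
Qed.

End Psi.
End Calc.
Lemma pmax (d : measure_display) (T : measurableType d) (R : realType)
  (P : probability T R) (n : nat) (X : 'I_n -> {RV P >-> R})
  (hind : mutually_independent X) (x : R) :
  P [set t | (maxrv X t <= x%:E)%E] = (\prod_(i < n) P [set t | (X i t <= x)%R])%E.
Proof.
have := hind (fun _ => [set` `]-oo, x]]) (fun _ => measurable_itv _).
have -> : [set t | forall i, [set` `]-oo, x]] (X i t)] = [set t | (maxrv X t <= x%:E)%E].
  apply/seteqP; split => t /=.
    move=> H; apply/bigmax_leP; split; first by rewrite leNye.
    by move=> i _; have := H i; rewrite in_itv /= lee_fin.
  move=> /bigmax_leP [_ H] i; rewrite in_itv /=; by have := H i isT; rewrite lee_fin.
move=> ->; apply: eq_bigr => i _; congr (P _).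
Qed.

Lemma pY_le (d : measure_display) (T : measurableType d) (R : realType)
  (P : probability T R) (Z : {RV P >-> R}) (x : R) (s : R)
  (hZ : P [set t | x < Z t] = s%:E) :
  P [set t | Z t <= x] = (1 - s)%:E.
Proof.
have mA : measurable [set t | x < Z t].
  have -> : [set t | x < Z t] = Z @^-1` [set` `]x, +oo[] .
    by apply/seteqP; split => t /=; rewrite in_itv /= andbT.
  exact: measurable_funPTI (measurable_itv _).
have -> : [set t | Z t <= x] = ~` [set t | x < Z t].
  by apply/seteqP; split => t /=; rewrite leNgt => /negP.
by rewrite probability_setC // hZ.
Qed.

Lemma pzero (d : measure_display) (T : measurableType d) (R : realType)
  (P : probability T R) (Z : {RV P >-> R}) (b theta : R) (b0 : 0 < b) (th0 : 0 < theta)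
  (hZ : forall x : R, 0 < x -> P [set t | x < Z t] = ((1 + x / theta) `^ (- b))%:E)
  (x : R) (x0 : x <= 0) : P [set t | Z t <= x] = 0%E.
Proof.
have mA : forall y, measurable [set t | Z t <= y].
  move=> y; have -> : [set t | Z t <= y] = Z @^-1` [set` `]-oo, y]] .
    by apply/seteqP; split => t /=; rewrite in_itv /=.
  exact: measurable_funPTI (measurable_itv _).
have H : forall e : R, 0 < e -> (P [set t | (Z t <= x)%R] <= e%:E)%E.
  move=> e e0.
  set eps := e * theta / b.
  have eps0 : 0 < eps by rewrite /eps divr_gt0 // mulr_gt0.
  apply: (@le_trans _ _ (P [set t | (Z t <= eps)%R])).
    apply: le_measure; rewrite ?inE; try exact: mA.
    move=> t /= h; apply: (le_trans h); apply: (le_trans x0); exact: ltW.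
  rewrite (@pY_le _ _ _ P Z eps _ (hZ eps eps0)) lee_fin.
  have bpos : 0 < 1 + eps / theta by rewrite addr_gt0 // divr_gt0.
  rewrite /powR gt_eqF //.
  have h1 := expR_ge1Dx (- b * ln (1 + eps / theta)).
  have h2 : ln (1 + eps / theta) <= eps / theta.
    have q0 : 0 < eps / theta by rewrite divr_gt0.
    by apply: le_ln1Dx; lra.
  have h3 : b * (eps / theta) = e by rewrite /eps; field; rewrite !lt0r_neq0.
  have h4 : b * ln (1 + eps / theta) <= b * (eps / theta) by rewrite ler_pM2l.
  rewrite mulNr in h1 *; lra.
have fA : P [set t | Z t <= x] \is a fin_num.
  rewrite ge0_fin_numE ?measure_ge0 //.
  by apply: (le_lt_trans (probability_le1 P (mA x))); rewrite ltey.
apply/eqP; rewrite eq_le measure_ge0 andbT.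
rewrite -(fineK fA) lee_fin; apply/unstable.ler_gtP => e e0; rewrite -lee_fin fineK //; exact: H.
Qed.

Lemma dfun_pos (d : measure_display) (T : measurableType d) (R : realType)
  (P : probability T R) (n : nat) (X : 'I_n -> {RV P >-> R}) (a : 'I_n -> R)
  (theta : R) (th0 : 0 < theta) (hind : mutually_independent X)
  (hX : forall i (x : R), 0 < x ->
     P [set t | x < X i t] = ((1 + x / theta) `^ (- a i))%:E)
  (x : R) (x0 : 0 < x) :
  dfun P (maxrv X) x = \prod_(i < n) (1 - expR (- (ln (1 + x / theta) * a i))).
Proof.
rewrite /dfun pmax //.
rewrite (eq_bigr (fun i => (1 - expR (- (ln (1 + x / theta) * a i)))%:E)); last first.
  move=> i _; rewrite (@pY_le _ _ _ P (X i) x _ (hX i x x0)) /powR gt_eqF; last first.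
    by rewrite addr_gt0 // divr_gt0.
  by congr ((1 - expR _)%:E); rewrite mulNr mulrC.
by rewrite prodEFin.
Qed.

Lemma dfun_zero (d : measure_display) (T : measurableType d) (R : realType)
  (P : probability T R) (n : nat) (hn : (0 < n)%N) (X : 'I_n -> {RV P >-> R}) (a : 'I_n -> R)
  (ha : forall i, 0 < a i)
  (theta : R) (th0 : 0 < theta) (hind : mutually_independent X)
  (hX : forall i (x : R), 0 < x ->
     P [set t | x < X i t] = ((1 + x / theta) `^ (- a i))%:E)
  (x : R) (x0 : x <= 0) :
  dfun P (maxrv X) x = 0.
Proof.
rewrite /dfun pmax // (bigD1 (Ordinal hn)) //=.
rewrite (@pzero _ _ _ P (X (Ordinal hn)) (a (Ordinal hn)) theta) //.
  by rewrite mul0e.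
by move=> y y0; apply: hX.
Qed.

Lemma sum_sort (R : realType) (n : nat) (f : 'I_n -> R) (g : R -> R) :
  \sum_(x <- sort <=%R (codom f)) g x = \sum_(i < n) g (f i).
Proof.
rewrite (perm_big (codom f)); last by rewrite perm_sort.
by rewrite codomE big_map big_enum.
Qed.

Lemma prod_ln (R : realType) (n : nat) (f : 'I_n -> R) : (forall i, 0 < f i) ->
  \prod_(i < n) f i = expR (\sum_(i < n) ln (f i)).
Proof.
move=> h; rewrite expR_sum; apply: eq_bigr => i _.
by rewrite lnK // posrE.
Qed.

Lemma fac_pos (R : realType) (k c : R) : 0 < k -> 0 < c -> 0 < 1 - expR (- (k * c)).
Proof. by move=> k0 c0; rewrite subr_gt0 expR_lt1 oppr_lt0 mulr_gt0. Qed.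

Theorem theorem6 (d : measure_display) (T : measurableType d) (R : realType)
  (P : probability T R) (n : nat) (hn : (0 < n)%N) (theta : R)
  (htheta : 0 < theta) (alpha alphas : 'I_n -> R)
  (halpha : forall i, 0 < alpha i) (halphas : forall i, 0 < alphas i)
  (X Y : 'I_n -> {RV P >-> R})
  (hXind : mutually_independent X) (hYind : mutually_independent Y)
  (hX : forall i (x : R), 0 < x ->
     P [set t | x < X i t] = ((1 + x / theta) `^ (- alpha i))%:E)
  (hY : forall i (x : R), 0 < x ->
     P [set t | x < Y i t] = ((1 + x / theta) `^ (- alphas i))%:E)
  (hmaj : weak_supmaj alpha alphas) :
  rh_le (dfun P (maxrv X)) (dfun P (maxrv Y)).
Proof.
move=> x y xy.
have dge0 : forall (Z : T -> \bar R) z, 0 <= dfun P Z z.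
  by move=> Z z; apply: fine_ge0; apply: measure_ge0.
case: (leP x 0) => [x0|x0].
  rewrite (@dfun_zero _ _ _ P n hn Y alphas halphas theta htheta hYind hY x x0) mulr0.
  by apply: mulr_ge0.
have y0 : 0 < y by apply: lt_le_trans xy.
move: xy; rewrite le_eqVlt => /orP[/eqP <-|xy]; first by rewrite mulrC.
rewrite (@dfun_pos _ _ _ P n X alpha theta htheta hXind hX x x0).
rewrite (@dfun_pos _ _ _ P n X alpha theta htheta hXind hX y y0).
rewrite (@dfun_pos _ _ _ P n Y alphas theta htheta hYind hY x x0).
rewrite (@dfun_pos _ _ _ P n Y alphas theta htheta hYind hY y y0).
have bx : 1 < 1 + x / theta by rewrite ltrDl divr_gt0.
have by' : 1 < 1 + y / theta by rewrite ltrDl divr_gt0.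
set u := ln (1 + x / theta); set v := ln (1 + y / theta).
have u0 : 0 < u by rewrite ln_gt0.
have uv : u < v.
  rewrite /u /v ltr_ln ?posrE ?(lt_trans ltr01) // ltrD2l ltr_pM2r //.
  by rewrite invr_gt0.
have v0 : 0 < v by apply: lt_trans uv.
rewrite !prod_ln; try by move=> i; apply: fac_pos.
rewrite -!expRD ler_expR.
have key : \sum_(i < n) psi R u v (alpha i) <= \sum_(i < n) psi R u v (alphas i).
  have Hdec := @psi_dec R u v u0 uv.
  have Hconv : forall x y z : R, 0 < x -> x < y -> y < z ->
      sl R (psi R u v) x y <= sl R (psi R u v) x z /\ sl R (psi R u v) x z <= sl R (psi R u v) y z.
    move=> a b c a0 ab bc.
    have h := @psi_chord R u v u0 uv a b c a0 ab bc.
    have p0 : 0 < b - a by rewrite subr_gt0.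
    have q0 : 0 < c - b by rewrite subr_gt0.
    have [h1 h2] := @med R _ _ _ _ p0 q0 h.
    have e1 : forall r s : R, sl R (psi R u v) r s = (psi R u v s - psi R u v r) / (s - r).
      by move=> r s; rewrite sl_sym.
    rewrite !e1.
    have -> : psi R u v c - psi R u v a = psi R u v b - psi R u v a + (psi R u v c - psi R u v b) by ring.
    have -> : c - a = b - a + (c - b) by ring.
    by split.
  set s := sort <=%R (codom alpha).
  set t := sort <=%R (codom alphas).
  have szs : size s = n by rewrite size_sort size_codom card_ord.
  have szt : size t = n by rewrite size_sort size_codom card_ord.
  have H := @tw R (psi R u v) Hdec Hconv s t.
  have := H _ (sort_sorted (@le_total _ R) _) (sort_sorted (@le_total _ R) _) _ _ 0 0 (lexx 0) (or_introl erefl).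
  rewrite mulr0 subr_ge0 !sum_sort; apply.
  - by rewrite szs szt.
  - by move=> z; rewrite mem_sort => /codomP [i ->].
  - by move=> z; rewrite mem_sort => /codomP [i ->].
  move=> k; rewrite add0r subr_le0.
  case: k => [|k]; first by rewrite !take0 !big_nil.
  case: (leqP k.+1 n) => kn; first by apply: hmaj; rewrite kn.
  rewrite !take_oversize ?szs ?szt ?(ltnW kn) //.
  have := hmaj n; rewrite !take_oversize ?szs ?szt //; apply.
  by rewrite hn leqnn.
have E : forall A B C D : R, A - C <= D - B -> A + B <= C + D.
  by move=> A B C D; lra.
by apply: E; move: key; rewrite /psi !sumrB.
Qed.
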